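(* Let $n\ge 1$ and let $T$ be a Cayley tree on $[n]$ rooted at $1$. Then $\mathrm{lead}(T) = n - \mathrm{impe}(T)$, where $\mathrm{lead}(T)$ is the number of leading vertices of $T$ and $\mathrm{impe}(T)$ is the number of improper edges of $T$.
   Context: A Cayley tree of size $n$ is a tree whose vertices are labelled bijectively by $[n]=\{1,\dots,n\}$; we consider such trees rooted at the vertex $1$ and orient each edge $(i,j)$ from the parent $i$ to the child $j$. For a vertex $v$, $\beta_T(v)$ is the smallest label among the descendants of $v$ ($v$ itself included). An edge $(i,j)$ is improper if $\lambda_T(i) > \beta_T(j)$ (where $\lambda_T$ denotes the label), and proper otherwise. For a vertex $i$, let $L(i)=(1=a_0,a_1,\dots,a_k=i)$ be the path from the root to $i$; the greater ancestors path of $i$ is the longest suffix $(a_p,a_{p+1},\dots,a_k=i)$ of $L(i)$ such that every vertex $j$ on it satisfies $\lambda_T(j)\ge \lambda_T(i)$. The vertex $i$ is a leading vertex if $\beta_T(a_p)=\lambda_T(i)$. *)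

(* Defs.v *)
From mathcomp Require Import all_boot.
Set Implicit Arguments. Unset Strict Implicit. Unset Printing Implicit Defensive.

(* A Cayley tree on [n] rooted at 1 is encoded by its parent map.
   Vertex v : 'I_n carries the label  lab v = v + 1, so the root (label 1)
   is the vertex with value 0.  The parent map par fixes the root and every
   vertex reaches the root by iterating par; the edges of the tree are the
   pairs (par v, v) for v not the root, oriented from parent to child. *)

Section CayleyTree.
Variable n : nat.
Implicit Types (par : 'I_n -> 'I_n) (u v w : 'I_n).

Definition lab v : nat := (val v).+1.

Definition is_root v : bool := lab v == 1.

Definition is_rooted_cayley_tree par : bool :=
  [forall v, is_root v ==> (par v == v)] &&
  [forall v, is_root (iter n par v)].

(* anc par u w : u lies on the root-to-w path L(w), i.e. w is a descendant
   of u (w itself included). *)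
Definition anc par u w : bool := [exists k : 'I_n.+1, iter k par w == u].

Definition beta par v : nat := \big[minn/n.+1]_(w | anc par v w) lab w.

Definition improper_child par v : bool :=
  ~~ is_root v && (beta par v < lab (par v)).

Definition impe par : nat := #|[set v | improper_child par v]|.

(* u = a_p is the first vertex of the greater ancestors path of i:
   u is on L(i), all vertices on L(i) from u to i have label >= lab i, and
   the suffix cannot be extended (u is the root or its parent has label
   < lab i). *)
Definition gap_start par i u : bool :=
  [&& anc par u i,
      [forall w, (anc par u w && anc par w i) ==> (lab i <= lab w)] &
      (is_root u || (lab (par u) < lab i))].

Definition leading par i : bool :=
  [exists u, gap_start par i u && (beta par u == lab i)].

Definition lead par : nat := #|[set i | leading par i]|.

End CayleyTree.

(* Main.v *)
Require Import Defs.
From mathcomp Require Import all_boot.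
From mathcomp Require Import zify.

Lemma ancP n (par : 'I_n -> 'I_n) u w :
  reflect (exists2 k, k <= n & iter k par w = u) (anc par u w).
Proof.
apply: (iffP existsP) => [[k /eqP Hk]|[k Hk Hu]].
  by exists k => //; have := ltn_ord k.
by exists (Ordinal (Hk : k < n.+1)); apply/eqP.
Qed.

Lemma anc_refl n (par : 'I_n -> 'I_n) v : anc par v v.
Proof. by apply/ancP; exists 0. Qed.

Lemma beta_le n (par : 'I_n -> 'I_n) v w : anc par v w -> beta par v <= lab w.
Proof.
move=> H; rewrite /beta.
have : w \in index_enum 'I_n by rewrite mem_index_enum.
elim: (index_enum 'I_n) => [//|x r IH]; rewrite inE big_cons.
case/orP => [/eqP <-|Hr]; first by rewrite H geq_minl.
case: ifP => _; last exact: IH.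
by rewrite geq_min IH ?orbT.
Qed.

Lemma beta_ge n (par : 'I_n -> 'I_n) v m :
  (forall w, anc par v w -> m <= lab w) -> m <= n.+1 -> m <= beta par v.
Proof.
move=> H Hm; rewrite /beta; elim/big_ind: _ => //.
  by move=> x y Hx Hy; rewrite leq_min Hx Hy.
Qed.

Definition gmin n (par : 'I_n -> 'I_n) v : 'I_n :=
  [arg min_(w < v | anc par v w) lab w].

Arguments gmin {n}.

Lemma gminP n (par : 'I_n -> 'I_n) v :
  anc par v (gmin par v) /\ beta par v = lab (gmin par v).
Proof.
rewrite /gmin; case: arg_minnP; first exact: anc_refl.
move=> w Hw Hmin; split => //.
apply/eqP; rewrite eqn_leq beta_le //=.
apply: beta_ge => //; rewrite /lab ltnS; exact: ltnW (ltn_ord _).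
Qed.

Lemma root_fix n (par : 'I_n -> 'I_n) v :
  is_rooted_cayley_tree par -> is_root v -> par v = v.
Proof. by case/andP => /forallP H _ Hv; apply/eqP; exact: (implyP (H v)). Qed.

Arguments root_fix {n par v}.

Lemma iter_big n (par : 'I_n -> 'I_n) v m :
  is_rooted_cayley_tree par -> n <= m -> is_root (iter m par v).
Proof.
move=> T Hm; have /andP[_ /forallP H2] := T.
rewrite -(subnK Hm) iterD.
elim: (m - n) => [|k IH] //=; by rewrite (root_fix T IH).
Qed.

Lemma iter_period n (par : 'I_n -> 'I_n) v p m :
  iter p par v = v -> iter (p * m) par v = v.
Proof.
move=> H; elim: m => [|m IH]; first by rewrite muln0.
by rewrite mulnS iterD IH H.
Qed.

Lemma gap_uniq n (par : 'I_n -> 'I_n) i u u' :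
  is_rooted_cayley_tree par -> gap_start par i u -> gap_start par i u' -> u = u'.
Proof.
move=> T.
suff W: forall u u', gap_start par i u -> gap_start par i u' ->
  (exists k, exists k', [/\ k < k' <= n, iter k par i = u & iter k' par i = u'])
  -> u = u'.
  move=> H1 H2.
  have /and3P[/ancP[k Hk Ek] _ _] := H1.
  have /and3P[/ancP[k' Hk' Ek'] _ _] := H2.
  case: (ltngtP k k') => Hkk.
  - by apply: W => //; exists k, k'; rewrite Hkk Hk'.
  - by apply/esym; apply: W => //; exists k', k; rewrite Hkk Hk.
  - by rewrite -Ek -Ek' Hkk.
move=> {}u {}u' /and3P[_ _ Hr] /and3P[_ /forallP Hf _] [k [k' [/andP[Hkk Hk'] Ek Ek']]].
have Hp: par u = iter k.+1 par i by rewrite -Ek.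
have Hle : lab i <= lab (par u).
  apply: (implyP (Hf (par u))); apply/andP; split; apply/ancP.
  - exists (k' - k.+1); first lia.
    by rewrite Hp -iterD subnK.
  - by exists k.+1; [lia | rewrite Hp].
have Ru : is_root u.
  case/orP: Hr => // H; move: Hle; rewrite leqNgt H //.
rewrite -Ek' -(subnK (ltnW Hkk)) iterD Ek.
elim: (k' - k) => [|m IH] //=; by rewrite -IH (root_fix T Ru).
Qed.

Arguments gminP {n}.
Arguments iter_big {n par}.
Arguments gap_uniq {n par}.

Theorem lemma11 (n : nat) (hn : 1 <= n) (par : 'I_n -> 'I_n) :
  is_rooted_cayley_tree par -> lead par = n - impe par.
Proof.
move=> T.
set S := [set v | ~~ improper_child par v].
have HS : #|S| = n - impe par.
  have := cardsC [set v | improper_child par v]; rewrite card_ord /impe.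
  have -> : ~: [set v | improper_child par v] = S.
    by apply/setP => v; rewrite !inE.
  lia.
have Hgap : forall v, v \in S -> gap_start par (gmin par v) v.
  move=> v; rewrite inE /improper_child negb_and negbK -leqNgt => Hv.
  have [Ha Hb] := gminP par v.
  apply/and3P; split => //.
    apply/forallP => w; apply/implyP => /andP[H1 _].
    by rewrite -Hb; apply: beta_le.
  case: (boolP (is_root v)) => Rv; first by apply/orP; left.
  apply/orP; right.
  move: Hv; rewrite (negbTE Rv) /= => Hv.
  rewrite ltn_neqAle -Hb Hv andbT.
  apply/negP => /eqP E.
  have E' : par v = gmin par v by apply/val_inj; rewrite Hb /lab in E; case: E.
  have /ancP[k Hk Ek] := Ha.
  have Hc : iter k.+1 par v = v by rewrite iterSr E'.
  have := iter_big v _ T (leq_pmull n (ltn0Sn k)).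
  by rewrite iter_period // (negbTE Rv).
rewrite /lead -HS.
have -> : [set i | leading par i] = gmin par @: S.
  apply/setP => i; rewrite inE; apply/idP/idP.
  - case/existsP => u /andP[Hg /eqP Hb].
    have Hi : gmin par u = i.
      have [_ Hb'] := gminP par u.
      by apply/val_inj; move: Hb; rewrite Hb' /lab => -[].
    rewrite -Hi; apply: imset_f.
    rewrite inE /improper_child negb_and negbK -leqNgt.
    case/and3P: Hg => _ _ /orP[R|H]; last by rewrite Hb ltnW ?orbT.
    by rewrite (root_fix T R) R.
  - case/imsetP => v Hv ->; apply/existsP; exists v.
    rewrite Hgap //=; by have [_ ->] := gminP par v.
apply: card_in_imset => v v' Hv Hv' E.
apply: (gap_uniq _ _ _ T (Hgap v Hv)); rewrite E; exact: Hgap.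
Qed.
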